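(* Let $w = 1+z$. Then, as formal power series in $x$ whose coefficients are polynomials in $z$, $$\sum_{n \ge 0} F_{n,n}(z)\, x^n \;=\; \frac{1}{\sqrt{(wx+1)^2 - 4w^2 x}}.$$ Here the square root is the formal power series in $x$ with constant term $1$.
   Context: Let $\mathbb{N} = \{0,1,2,\dots\}$. For $(p,q) \in \mathbb{N}^2$ and $n \in \mathbb{N}$, an unrestricted generalized jump path of length $n$ starting at $(p,q)$ is a sequence $(x_0, \dots, x_n)$ of points of $\mathbb{N}^2$ satisfying three conditions: - $x_0 = (p,q)$; - for every $i$, each coordinate of $x_{i+1}$ is at most the corresponding coordinate of $x_i$; - $x_{i+1} \ne x_i$ for every $i$. Let $u((p,q),n)$ denote the number of such paths, and define the polynomial $F_{p,q}(z) = \sum_{k=0}^{p+q} u((p,q),k)\, z^k$. *)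

(* Defs.v *)
From HB Require Import structures.
From mathcomp Require Import all_boot all_order all_algebra.
Set Implicit Arguments. Unset Strict Implicit. Unset Printing Implicit Defensive.
Import Order.TTheory GRing.Theory Num.Theory.
Local Open Scope ring_scope.

(* A path (x_0,...,x_n) starting at (p,q) with coordinatewise nonincreasing
   steps stays in the box [0,p] x [0,q]; we therefore encode its points in
   'I_p.+1 * 'I_q.+1 (this is a bijection with the paper's paths in N^2). *)
Definition pt_le (p q : nat) (y x : 'I_p.+1 * 'I_q.+1) : bool :=
  ((val y.1 <= val x.1)%N && (val y.2 <= val x.2)%N).

Definition is_jump_path (p q n : nat)
    (t : {ffun 'I_n.+1 -> 'I_p.+1 * 'I_q.+1}) : bool :=
  [&& val (t ord0).1 == p, val (t ord0).2 == q &
      [forall i : 'I_n,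
         let xi  := t (widen_ord (leqnSn n) i) in
         let xi1 := t (lift ord0 i) in
         pt_le xi1 xi && (xi1 != xi)]].

Definition u (p q n : nat) : nat := #|[pred t | @is_jump_path p q n t]|.

Definition Fpoly (p q : nat) : {poly int} :=
  \sum_(k < (p + q).+1) (u p q k)%:R *: 'X^k.

Definition ps (R : nzRingType) := nat -> R.
Definition ps_C (R : nzRingType) (c : R) : ps R := fun n => if n == 0%N then c else 0.
Definition ps_X (R : nzRingType) : ps R := fun n => if n == 1%N then 1 else 0.
Definition ps_add (R : nzRingType) (f g : ps R) : ps R := fun n => f n + g n.
Definition ps_sub (R : nzRingType) (f g : ps R) : ps R := fun n => f n - g n.
Definition ps_mul (R : nzRingType) (f g : ps R) : ps R :=
  fun n => \sum_(i < n.+1) f i * g (n - i)%N.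

(* G = 1 / sqrt(H), where sqrt(H) is the formal square root with constant
   term 1 (H must have constant term 1): G has constant term 1 and G^2 H = 1. *)
Definition is_inv_sqrt (R : nzRingType) (G H : ps R) : Prop :=
  G 0%N = 1 /\ ps_mul (ps_mul G G) H = ps_C 1.

(* Main.v *)
Require Import Defs.
From HB Require Import structures.
From mathcomp Require Import all_boot all_order all_algebra.
From mathcomp Require Import ring zify.
Import Order.TTheory GRing.Theory Num.Theory.
Local Open Scope ring_scope.
Set Implicit Arguments. Unset Strict Implicit. Unset Printing Implicit Defensive.

Definition PI := {poly int}.
Definition ww : PI := 1 + 'X.

Fixpoint frow (prev : nat -> PI) (p0 : bool) (q : nat) : PI :=
  match q with
  | 0 => 0
  | q'.+1 => ww * (prev q + frow prev p0 q' - prev q') +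
             (if p0 && (q' == 0)%N then 1 else 0)
  end.

Fixpoint ff (p : nat) : nat -> PI :=
  match p with
  | 0 => fun _ => 0
  | p'.+1 => frow (ff p') (p' == 0)%N
  end.

Lemma ff0q q : ff 0 q = 0. Proof. by []. Qed.
Lemma ffp0 p : ff p 0 = 0. Proof. by case: p. Qed.
Lemma ffS p q : ff p.+1 q.+1 =
  ww * (ff p q.+1 + ff p.+1 q - ff p q) + (if (p == 0)%N && (q == 0)%N then 1 else 0).
Proof. by []. Qed.

Arguments ff : simpl never.

Lemma ff_sym p q : ff p q = ff q p.
Proof.
elim: p q => [|p IHp] q; first by rewrite ff0q ffp0.
elim: q => [|q IHq]; first by rewrite ff0q ffp0.
by rewrite !ffS (IHp q.+1) (IHp q) IHq andbC [ff q.+1 p + _]addrC.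
Qed.

Definition EE P Q := P%:R * ff P.+1 Q - Q%:R * ff P Q.+1 - (P%:R - Q%:R) * ff P Q.

Lemma EE0 P Q : EE P Q = 0.
Proof.
elim: P Q => [|P IHP] Q; first by rewrite /EE !ff0q; ring.
elim: Q => [|Q IHQ]; first by rewrite /EE !ffp0 ; ring.
have hd : ((P%:R - Q%:R) * (if (P == 0)%N && (Q == 0)%N then 1 else 0) = 0 :> PI).
  by case: P {IHP IHQ} => [|P]; case: Q => [|Q] //=; rewrite ?mulr0 ?subrr ?mul0r.
set d : PI := (if (P == 0)%N && (Q == 0)%N then 1 else 0) in hd *.
have key : EE P.+1 Q.+1 = ww * (EE P Q.+1 + EE P.+1 Q - EE P Q) - (P%:R - Q%:R) * d.
  rewrite /EE (ffS P.+1 Q) (ffS P Q.+1) /= (ffS P Q) -/d /ww.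
  rewrite andbF addr0; clearbody d; ring.
by rewrite key IHQ !IHP hd; ring.
Qed.

Lemma diag_rec n :
  (n.+2)%:R * ff n.+3 n.+3 + (n.*2.+3)%:R * (ww - 2%:R * ww ^+ 2) * ff n.+2 n.+2
  + (n.+1)%:R * ww ^+ 2 * ff n.+1 n.+1 = 0.
Proof.
set a0 := ff n.+1 n.+1; set a1 := ff n.+2 n.+2; set a2 := ff n.+3 n.+3.
set b0 := ff n.+2 n.+1; set b1 := ff n.+3 n.+2; set c0 := ff n.+3 n.+1.
have e1 : a1 - ww * (2%:R * b0 - a0) = 0.
  by rewrite /a1 ffS (ff_sym n.+1 n.+2) andbF addr0 -/b0 -/a0; ring.
have e2 : (n.+2)%:R * c0 - (n.+1)%:R * a1 - b0 = 0.
  by have := EE0 n.+2 n.+1; rewrite /EE -/a1 -/b0 -/c0 => <-; ring.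
have e3 : b1 - ww * (a1 + c0 - b0) = 0.
  by rewrite /b1 ffS andbF addr0 -/a1 -/c0 -/b0; ring.
have e4 : a2 - ww * (2%:R * b1 - a1) = 0.
  by rewrite /a2 ffS (ff_sym n.+2 n.+3) andbF addr0 -/b1 -/a1; ring.
rewrite -[RHS](_ : (n.+2)%:R * 0 + 2%:R * ww * (n.+2)%:R * 0 + 2%:R * ww^+2 * 0
   + (n.+1)%:R * ww * 0 = 0); last by ring.
rewrite -{1}e4 -{1}e3 -{1}e2 -{1}e1.
clearbody a0 a1 a2 b0 b1 c0; rewrite -mul2n; ring.
Qed.

Lemma a0E : ff 1 1 = 1.
Proof. by rewrite ffS ffp0 ff0q; ring. Qed.
Lemma a1E : ff 2 2 = ww * (2%:R * ww - 1).
Proof.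
rewrite ffS (ff_sym 1 2) ffS ffS !ffp0 !ff0q /=; ring.
Qed.

Fixpoint cc (k a b : nat) : nat :=
  match k with
  | 0 => 1%N
  | k'.+1 => (\sum_(i < a) \sum_(j < b.+1) cc k' i j + \sum_(j < b) cc k' a j)%N
  end.

Lemma cc_rec k a b :
  (cc k.+1 a b + cc k a b = \sum_(i < a.+1) \sum_(j < b.+1) cc k i j)%N.
Proof.
by rewrite /= big_ord_recr /= big_ord_recr /= addnA.
Qed.

Lemma cc_van k a b : (a + b < k)%N -> cc k a b = 0%N.
Proof.
elim: k a b => [//|k IH] a b hk /=.
rewrite big1 ?add0n; last first.
  move=> i _; rewrite big1 // => j _; apply: IH.
  have := ltn_ord i; have := ltn_ord j; lia.
rewrite big1 // => j _; apply: IH; have := ltn_ord j; lia.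
Qed.

Definition Fk a b : PI := \poly_(k < (a + b).+1) (cc k a b)%:R.

Lemma coef_Fk a b k : (Fk a b)`_k = (cc k a b)%:R.
Proof.
rewrite coef_poly; case: ltnP => // h.
by rewrite cc_van.
Qed.

Definition TT A B : PI := \sum_(i < A) \sum_(j < B) Fk i j.

Lemma TT0B B : TT 0 B = 0. Proof. by rewrite /TT big_ord0. Qed.
Lemma TTA0 A : TT A 0 = 0. Proof. by rewrite /TT big1 // => i _; rewrite big_ord0. Qed.

Lemma sumS2 A B (F : nat -> nat -> PI) :
  \sum_(i < A) \sum_(j < B.+1) F i j = \sum_(i < A) \sum_(j < B) F i j + \sum_(i < A) F i B.
Proof. by rewrite -big_split /=; apply: eq_bigr => i _; rewrite big_ord_recr. Qed.

Lemma TT_ie A B : TT A.+1 B.+1 = TT A B.+1 + TT A.+1 B - TT A B + Fk A B.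
Proof.
rewrite /TT !(big_ord_recr A) /= !sumS2 big_ord_recr /=; ring.
Qed.

Lemma key a b : ww * Fk a b = 1 + 'X * TT a.+1 b.+1.
Proof.
apply/polyP => n.
rewrite /ww mulrDl mul1r coefD coefD coefXM coefXM coef1 /TT coef_sum.
case: n => [|m] /=; first by rewrite coef_Fk /= addr0.
rewrite !coef_Fk add0r -natrD cc_rec natr_sum.
apply: eq_bigr => i _; rewrite coef_sum natr_sum.
by apply: eq_bigr => j _; rewrite coef_Fk.
Qed.

Ltac kill := rewrite ?key ?subrr ?addr0 ?subr0.

Lemma FkR1 a b : Fk a.+1 b.+1 = ww * (Fk a b.+1 + Fk a.+1 b - Fk a b).
Proof.
apply/eqP; rewrite -subr_eq0; apply/eqP.
rewrite -[RHS](_ : (ww * Fk a.+1 b.+1 - (1 + 'X * TT a.+2 b.+2))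
  - (ww * Fk a b.+1 - (1 + 'X * TT a.+1 b.+2))
  - (ww * Fk a.+1 b - (1 + 'X * TT a.+2 b.+1))
  + (ww * Fk a b - (1 + 'X * TT a.+1 b.+1)) = 0); last by rewrite !key !subrr; ring.
rewrite (TT_ie a.+1 b.+1) /ww; ring.
Qed.

Lemma FkR2 b : Fk 0 b.+1 = ww * Fk 0 b.
Proof.
apply/eqP; rewrite -subr_eq0; apply/eqP.
rewrite -[RHS](_ : (ww * Fk 0 b.+1 - (1 + 'X * TT 1 b.+2))
  - (ww * Fk 0 b - (1 + 'X * TT 1 b.+1)) = 0); last by rewrite !key !subrr; ring.
rewrite (TT_ie 0 b.+1) !TT0B /ww; ring.
Qed.

Lemma FkR3 a : Fk a.+1 0 = ww * Fk a 0.
Proof.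
apply/eqP; rewrite -subr_eq0; apply/eqP.
rewrite -[RHS](_ : (ww * Fk a.+1 0 - (1 + 'X * TT a.+2 1))
  - (ww * Fk a 0 - (1 + 'X * TT a.+1 1)) = 0); last by rewrite !key !subrr; ring.
rewrite (TT_ie a.+1 0) !TTA0 /ww; ring.
Qed.

Lemma FkR4 : Fk 0 0 = 1.
Proof.
apply/eqP; rewrite -subr_eq0; apply/eqP.
rewrite -[RHS](_ : (ww * Fk 0 0 - (1 + 'X * TT 1 1)) = 0); last by rewrite !key !subrr.
rewrite (TT_ie 0 0) !TTA0 !TT0B /ww; ring.
Qed.

Lemma ff_Fk a b : ff a.+1 b.+1 = Fk a b.
Proof.
elim: a b => [|a IHa] b.
  elim: b => [|b IHb]; first by rewrite ffS !ffp0 !ff0q FkR4 /=; ring.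
  by rewrite ffS IHb !ff0q FkR2 /= addr0; congr (_ * _); ring.
elim: b => [|b IHb]; first by rewrite ffS IHa !ffp0 FkR3 /= addr0; congr (_ * _); ring.
by rewrite ffS IHa IHb IHa FkR1 /= addr0.
Qed.

Lemma sum_cut (p a : nat) (G : nat -> nat) : (a <= p)%N ->
  (\sum_(i < p.+1) (if (i <= a)%N then G i else 0%N) = \sum_(i < a.+1) G i)%N.
Proof.
move=> ha.
rewrite -(big_mkord xpredT (fun i => if (i <= a)%N then G i else 0%N)) -(big_mkord xpredT G).
rewrite [LHS](big_cat_nat (n:=a.+1)) //=.
rewrite [X in (_ + X)%N]big_nat_cond [X in (_ + X)%N]big1 ?addn0; last first.
  by move=> i /andP[/andP[hi _] _]; rewrite leqNgt hi.
rewrite big_nat_cond [RHS]big_nat_cond; apply: eq_bigr => i /andP[/andP[_ hi] _].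
by rewrite -ltnS hi.
Qed.

Section Box.
Variables p q : nat.
Local Notation T := ('I_p.+1 * 'I_q.+1)%type.

Definition step (y x : T) := pt_le y x && (y != x).

Definition chain n (t : {ffun 'I_n.+1 -> T}) : bool :=
  [forall i : 'I_n, step (t (lift ord0 i)) (t (widen_ord (leqnSn n) i))].

Definition v n (x : T) := #|[pred t : {ffun 'I_n.+1 -> T} | (t ord0 == x) && chain t]|.

Definition tl n (t : {ffun 'I_n.+2 -> T}) : {ffun 'I_n.+1 -> T} :=
  [ffun j => t (lift ord0 j)].
Definition cns n (x : T) (s : {ffun 'I_n.+1 -> T}) : {ffun 'I_n.+2 -> T} :=
  [ffun i => if unlift ord0 i is Some j then s j else x].

Lemma tl_cns n x (s : {ffun 'I_n.+1 -> T}) : tl (cns x s) = s.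
Proof. by apply/ffunP => j; rewrite !ffunE liftK. Qed.

Lemma cns0 n x (s : {ffun 'I_n.+1 -> T}) : cns x s ord0 = x.
Proof. by rewrite ffunE unlift_none. Qed.

Lemma cns_tl n (t : {ffun 'I_n.+2 -> T}) : cns (t ord0) (tl t) = t.
Proof.
apply/ffunP => i; rewrite ffunE; case: unliftP => [j ->|->] //.
by rewrite ffunE.
Qed.

Lemma wid0 n : widen_ord (leqnSn n.+1) ord0 = ord0 :> 'I_n.+2.
Proof. exact: val_inj. Qed.
Lemma widL n (j : 'I_n) :
  widen_ord (leqnSn n.+1) (lift ord0 j) = lift ord0 (widen_ord (leqnSn n) j).
Proof. exact: val_inj. Qed.

Lemma chainS n (t : {ffun 'I_n.+2 -> T}) :
  chain t = step (tl t ord0) (t ord0) && chain (tl t).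
Proof.
rewrite /chain; apply/forallP/andP => [H|[H0 /forallP H] i].
  split; first by have := H ord0; rewrite wid0 ffunE.
  by apply/forallP => j; have := H (lift ord0 j); rewrite widL !ffunE.
case: (unliftP ord0 i) => [j ->|->]; last by rewrite wid0 -(ffunE (fun j => t (lift ord0 j))).
by have := H j; rewrite widL !ffunE.
Qed.

Lemma v_rec n x : v n.+1 x = (\sum_(y | step y x) v n y)%N.
Proof.
rewrite /v -sum1_card (partition_big (fun t => tl t ord0) xpredT) //=.
rewrite (bigID (fun y => step y x)) /= [X in (_ + X)%N]big1 ?addn0; last first.
  move=> y hy; rewrite big_pred0 // => t.
  apply/negP => /andP[/andP[/eqP h0]]; rewrite chainS => /andP[hs _] /eqP hy'.
  by move: hy; rewrite -hy' -h0 hs.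
apply: eq_bigr => y hy; rewrite sum1_card.
have cinj : injective (@cns n x) by apply: (can_inj (@tl_cns n x)).
rewrite -(card_imset [pred s : {ffun 'I_n.+1 -> T} | (s ord0 == y) && chain s] cinj).
apply: eq_card => t; rewrite unfold_in /= !inE; apply/idP/imsetP.
  move=> /andP[/andP[/eqP h0 hc] /eqP hy0]; exists (tl t); last by rewrite -h0 cns_tl.
  by rewrite inE hy0 eqxx /=; move: hc; rewrite chainS => /andP[].
move=> [s]; rewrite inE => /andP[/eqP hs0 hc] ->.
rewrite cns0 eqxx chainS tl_cns hs0 hc cns0 eqxx /=. by rewrite !andbT.
Qed.

Lemma v_c n x : v n x = cc n x.1 x.2.
Proof.
elim: n x => [|n IH] x.
  rewrite /v /=.
  rewrite (eq_card (B := pred1 [ffun => x])) ?card1 // => t.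
  rewrite !inE /chain.
  have -> : [forall i : 'I_0, step (t (lift ord0 i)) (t (widen_ord (leqnSn 0) i))] by apply/forallP => -[].
  rewrite andbT; apply/eqP/eqP => [<-|->]; last by rewrite ffunE.
  by apply/ffunP => i; rewrite ffunE (ord1 i).
rewrite v_rec; under eq_bigr => y _ do rewrite IH.
case: x => [a b] /=.
transitivity (\sum_(i < p.+1) \sum_(j < q.+1)
   (if (i <= a)%N then (if (j <= b)%N then (if (i < a)%N || (j < b)%N then cc n i j else 0) else 0) else 0))%N.
  rewrite pair_bigA big_mkcond; apply: eq_bigr => -[i j] _ /=.
  rewrite /step /pt_le /= xpair_eqE -!val_eqE /=.
  case: (leqP i a) => hia; case: (leqP j b) => hjb //=; rewrite ?andbF //.
  by rewrite !ltn_neqAle hia hjb !andbT negb_and.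
transitivity (\sum_(i < p.+1) (if (i <= a)%N then
   \sum_(j < q.+1) (if (j <= b)%N then (if (i < a)%N || (j < b)%N then cc n i j else 0) else 0) else 0))%N.
  by apply: eq_bigr => i _; case: ifP => // _; rewrite big1.
have ha : (a <= p)%N by rewrite -ltnS.
have hb : (b <= q)%N by rewrite -ltnS.
rewrite (@sum_cut p a (fun i => \sum_(j < q.+1) (if (j <= b)%N then (if (i < a)%N || (j < b)%N then cc n i j else 0) else 0))%N ha).
rewrite big_ord_recr /=; congr (_ + _)%N.
  apply: eq_bigr => i _.
  rewrite (@sum_cut q b (fun j => if (i < a)%N || (j < b)%N then cc n i j else 0)%N hb) /=.
  by apply: eq_bigr => j _; rewrite ltn_ord.
rewrite (@sum_cut q b (fun j => if (a < a)%N || (j < b)%N then cc n a j else 0)%N hb) /=.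
rewrite ltnn big_ord_recr /= ltnn addn0. by apply: eq_bigr => j _; rewrite ltn_ord.
Qed.

End Box.

Lemma u_cc p q n : u p q n = cc n p q.
Proof.
rewrite /u -(@v_c p q n (ord_max, ord_max)) /v.
apply: eq_card => t; rewrite !inE /is_jump_path /chain /step.
by case: (t ord0) => i j; rewrite andbA xpair_eqE -!val_eqE.
Qed.

Lemma Fpoly_ff p q : Fpoly p q = ff p.+1 q.+1.
Proof.
rewrite ff_Fk /Fpoly /Fk poly_def; apply: eq_bigr => k _; by rewrite u_cc.
Qed.

Lemma ps_mul_poly (f g : ps PI) (a b : {poly PI}) n :
  (forall i, (i <= n)%N -> f i = a`_i) -> (forall i, (i <= n)%N -> g i = b`_i) ->
  forall m, (m <= n)%N -> ps_mul f g m = (a * b)`_m.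
Proof.
move=> hf hg m hm; rewrite /ps_mul coefM; apply: eq_bigr => i _.
have hi : (i <= m)%N by rewrite -ltnS.
rewrite hf ?hg //; first exact: leq_trans (leq_subr _ _) hm.
exact: leq_trans hi hm.
Qed.

Lemma polyn0 (x : PI) n : x *+ n.+1 = 0 -> x = 0.
Proof.
move=> h; apply/polyP => i; have := congr1 (fun p : PI => p`_i) h.
by rewrite coefMn coef0 => /eqP; rewrite mulrn_eq0 /= => /eqP ->.
Qed.

Definition Sd n : PI := ff n.+1 n.+1.
Definition SN N : {poly PI} := \poly_(i < N.+1) Sd i.
Lemma coef_SN N i : (i <= N)%N -> (SN N)`_i = Sd i.
Proof. by move=> h; rewrite coef_poly ltnS h. Qed.

Definition W : {poly PI} := ww%:P.
Definition Dp : {poly PI} := (W * 'X + 1) * (W * 'X + 1) - (4%:R * ww ^+ 2)%:P * 'X.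
Definition k1 : PI := ww *+ 2 - 4%:R * ww ^+ 2.
Definition k2 : PI := ww ^+ 2.

Lemma c4E : (4%:R * ww ^+ 2)%:P = 4%:R * W ^+ 2 :> {poly PI}.
Proof. by rewrite rmorphM rmorphXn /= rmorph_nat. Qed.
Lemma k1E : k1%:P = W *+ 2 - 4%:R * W ^+ 2.
Proof. by rewrite /k1 rmorphB rmorphMn /= c4E. Qed.
Lemma k2E : k2%:P = W ^+ 2.
Proof. by rewrite /k2 rmorphXn. Qed.

Lemma DpD : Dp^`() = (W * 'X + 1) * W *+ 2 - (4%:R * ww ^+ 2)%:P.
Proof.
have d1 : (1 : {poly PI})^`() = 0 by rewrite -polyC1 derivC.
rewrite /Dp derivB !derivM derivD derivM derivX /W !derivC ?d1.
ring.
Qed.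

Definition EN N : {poly PI} := (Dp * (SN N)^`()) *+ 2 + Dp^`() * SN N.

Lemma EN_dec N : EN N =
  ((SN N)^`() *+ 2 + k1%:P * SN N)
  + 'X * ((k1 *+ 2)%:P * (SN N)^`() + (k2 *+ 2)%:P * SN N)
  + 'X * ('X * ((k2 *+ 2)%:P * (SN N)^`())).
Proof.
rewrite /EN DpD /Dp !rmorphMn /= k1E k2E c4E /W; ring.
Qed.

Lemma EN0 N m : (m < N)%N -> (EN N)`_m = 0.
Proof.
move=> hm; rewrite EN_dec !coefD !coefXM.
case: m hm => [|[|k]] hm /=.
- rewrite !coefCM !coef_deriv !coef_SN // /Sd a0E a1E /k1 /ww; ring.
- rewrite ?coefD ?coefMn !coefCM !coef_deriv !coef_SN // ?(ltnW hm) //.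
  rewrite ?addr0 /Sd.
  have := diag_rec 0; rewrite /k1 /k2 => h.
  rewrite -[RHS](_ : 2%:R * 0 = 0 :> PI); last by rewrite mulr0.
  rewrite -{1}h a0E -mul2n; ring.
- rewrite ?coefD ?coefMn !coefCM !coef_deriv !coef_SN //; try lia.
  rewrite ?addr0 /Sd.
  have := diag_rec k.+1; rewrite /k1 /k2 => h.
  rewrite -[RHS](_ : 2%:R * 0 = 0 :> PI); last by rewrite mulr0.
  rewrite -{1}h -!mul2n; ring.
Qed.

Lemma Q_deriv N : (SN N * SN N * Dp)^`() = SN N * EN N.
Proof. rewrite /EN !derivM; ring. Qed.

Lemma Q_coef n : (0 < n)%N -> (SN n * SN n * Dp)`_n = 0.
Proof.
case: n => [//|m] _.
apply: (@polyn0 _ m); rewrite -coef_deriv Q_deriv coefM big1 // => i _.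
rewrite EN0 ?mulr0 //; rewrite ltnS; exact: leq_subr.
Qed.

Lemma Dp0 : Dp`_0 = 1.
Proof. rewrite /Dp coefB !coef0M !coefD !coef0M !coefX coef1 /=; ring. Qed.

From Stdlib Require Import FunctionalExtensionality.

Theorem mainTheorem6 :
  let w : {poly int} := 1 + 'X in
  let S : ps {poly int} := fun n => Fpoly n n in
  let wx1 := ps_add (ps_mul (ps_C w) (ps_X _)) (ps_C 1) in
  let D := ps_sub (ps_mul wx1 wx1)
                  (ps_mul (ps_C (4%:R * w ^+ 2)) (ps_X _)) in
  is_inv_sqrt S D.
Proof.
move=> w S wx1 D.
have hS i : S i = Sd i by rewrite /S Fpoly_ff.
have hC (c : PI) i : ps_C c i = (c%:P)`_i by rewrite coefC.
have hX i : ps_X _ i = ('X : {poly PI})`_i by rewrite coefX /ps_X; case: (i == 1)%N.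
have hM (f g : ps PI) (a b : {poly PI}) : (forall i, f i = a`_i) -> (forall i, g i = b`_i) ->
    forall i, ps_mul f g i = (a * b)`_i.
  by move=> hf hg i; apply: (ps_mul_poly (n := i)) => // j _.
have hw i : wx1 i = (W * 'X + 1)`_i.
  by rewrite /wx1 /ps_add coefD (hM _ _ W 'X (hC w) hX) hC polyC1.
have hD i : D i = Dp`_i.
  by rewrite /D /ps_sub /Dp coefB (hM _ _ (W * 'X + 1) (W * 'X + 1) hw hw) (hM _ _ (4%:R * ww ^+ 2)%:P 'X (hC _) hX).
split; first by rewrite hS /Sd a0E.
apply: functional_extensionality => n.
rewrite (ps_mul_poly (a := SN n * SN n) (b := Dp) (n := n)) //; first last.
  move=> i hi; rewrite (ps_mul_poly (a := SN n) (b := SN n) (n := n)) // => j hj;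
  by rewrite hS coef_SN.
case: n => [|m].
  by rewrite !coef0M !coef_SN // /Sd a0E Dp0 !mulr1.
by rewrite Q_coef.
Qed.
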